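(* Given a bounded word equation $u \,\dot{=}\, v$ with $u,v \in \Xi^*$ and bounds $B:\Gamma\to\mathbb{N}$, the equation automaton $A(u \,\dot{=}\, v,B)$ reaches an accepting state if and only if there exists a substitution $S$ such that $S(u)=S(v)$ (i.e. $S$ is a solution of $u \,\dot{=}\, v$) and $|S(X)| \leq B(X)$ for all $X \in \Gamma$.
   Context: Let $\Xi=\Sigma\cup\Gamma$ with $\Sigma$ a finite set of letters and $\Gamma$ a finite set of variables, $\Sigma\cap\Gamma=\emptyset$. A substitution is a morphism $S:\Xi^*\to\Sigma^*$ fixing letters. A bounded word equation is a word equation $u \,\dot{=}\, v$ together with bounds $b_X=B(X)$ on the lengths of the images of the variables. Each variable $X$ is replaced by a sequence of ''filled variables'' $X^{(0)}\cdots X^{(b_X-1)}$, each of which is mapped to exactly one symbol of $\Sigma_\lambda=\Sigma\cup\{\lambda\}$, where the fresh symbol $\lambda$ is a placeholder for the empty word (marking unused positions at the end of a variable). Write $\hat u,\hat v$ for the resulting filled patterns over $\Sigma\cup\hat\Gamma$ ($\hat\Gamma$ the set of filled variables). For a partial filled substitution $\hat S$, two symbols $a,b$ are compatible, $a \sim_{\hat S} b$, iff $\hat S(a)=\hat S(b)$ or one of $\hat S(a),\hat S(b)$ is undefined; $S[X\mapsto b]$ denotes $S\cup\{X\mapsto b\}$ if $S(X)$ is undefined and $S$ otherwise. The equation automaton $A(u \,\dot{=}\, v,B)=(Q,\delta,I,F)$ has states $((i,j),S)$ with $i\in\{0,\dots,|\hat u|\}$, $j\in\{0,\dots,|\hat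 v|\}$ and $S$ a partial map from filled symbols to $\Sigma_\lambda$; transitions on input $a\in\Sigma_\lambda$: $\delta(((i,j),S),a)=((i+1,j+1),S[\hat u[i]\mapsto a][\hat v[j]\mapsto a])$ if $\hat u[i]\sim_{\hat S}\hat v[j]\sim_{\hat S} a$; $=((i+1,j),S[\hat u[i]\mapsto\lambda])$ if $\hat u[i]\sim_{\hat S}\lambda=a$; $=((i,j+1),S[\hat v[j]\mapsto\lambda])$ if $\hat v[j]\sim_{\hat S}\lambda=a$ (nondeterministic). Initial state $((0,0),\{a\mapsto a \mid a\in\Sigma_\lambda\})$; final states are all $((|\hat u|,|\hat v|),S)$. *)

(* Defs.v *)
From mathcomp Require Import all_boot.
Set Implicit Arguments. Unset Strict Implicit. Unset Printing Implicit Defensive.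

Section EqAut.
Variables (Sigma Gamma : finType).

(* Words over Xi = Sigma ∪ Gamma: letters are [inl a], variables are [inr X]. *)
Definition word := seq (Sigma + Gamma).

Definition subst (S : Gamma -> seq Sigma) (w : word) : seq Sigma :=
  flatten [seq match x with inl a => [:: a] | inr X => S X end | x <- w].

(* Filled symbols together with Sigma_lambda:
   [inl (Some a)] = letter a, [inl None] = lambda, [inr (X,k)] = X^(k). *)
Definition sym := (option Sigma + (Gamma * nat))%type.

Definition fill (B : Gamma -> nat) (x : Sigma + Gamma) : seq sym :=
  match x with
  | inl a => [:: inl (Some a)]
  | inr X => [seq inr (X, k) | k <- iota 0 (B X)]
  end.

Definition hat (B : Gamma -> nat) (w : word) : seq sym := flatten (map (fill B) w).

Definition pmap := sym -> option (option Sigma).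

Definition compat (S : pmap) (x y : sym) : Prop :=
  match S x, S y with
  | Some a, Some b => a = b
  | _, _ => True
  end.

Definition upd (S : pmap) (x : sym) (b : option Sigma) : pmap :=
  match S x with
  | Some _ => S
  | None => fun y => if y == x then Some b else S y
  end.

Definition state := ((nat * nat) * pmap)%type.

Definition init_state : state :=
  ((0, 0), fun s => match s with inl a => Some a | inr _ => None end).

(* Transition relation of A(u =. v, B), the input letter being existentially
   quantified (we only care about reachability). *)
Inductive step (B : Gamma -> nat) (u v : word) : state -> state -> Prop :=
| step_both i j S x y (a : option Sigma) :
    onth (hat B u) i = Some x -> onth (hat B v) j = Some y ->
    compat S x y -> compat S y (inl a) -> compat S x (inl a) ->
    step B u v ((i, j), S) ((i.+1, j.+1), upd (upd S x a) y a)
| step_left i j S x :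
    onth (hat B u) i = Some x -> compat S x (inl None) ->
    step B u v ((i, j), S) ((i.+1, j), upd S x None)
| step_right i j S y :
    onth (hat B v) j = Some y -> compat S y (inl None) ->
    step B u v ((i, j), S) ((i, j.+1), upd S y None).

Inductive reach (B : Gamma -> nat) (u v : word) : state -> Prop :=
| reach_init : reach B u v init_state
| reach_step q q' : reach B u v q -> step B u v q q' -> reach B u v q'.

Definition accepts (B : Gamma -> nat) (u v : word) : Prop :=
  exists S : pmap, reach B u v ((size (hat B u), size (hat B v)), S).

End EqAut.

(* Main.v *)
Require Import Defs.
From mathcomp Require Import all_boot zify.
Set Implicit Arguments. Unset Strict Implicit. Unset Printing Implicit Defensive.

Section Proofs.
Variables (Sigma Gamma : finType) (u v : seq (Sigma + Gamma)) (B : Gamma -> nat).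

Lemma onth_take (T : Type) (s : seq T) i x :
  onth s i = Some x -> take i.+1 s = rcons (take i s) x.
Proof.
move=> h; have hi : i < size s by rewrite -onthTE h.
by rewrite (take_nth x hi) (onth_nth x _ _ _ h).
Qed.

Lemma onth_mem (T : eqType) (s : seq T) i x : onth s i = Some x -> x \in s.
Proof. by move=> h; apply/onthP; exists i. Qed.

Definition val (S : Defs.pmap Sigma Gamma) (s : sym Sigma Gamma) : seq Sigma :=
  if S s is Some (Some a) then [:: a] else [::].

Definition ext (S S' : Defs.pmap Sigma Gamma) := forall s, S s != None -> S' s = S s.

Lemma upd_ext (S : Defs.pmap Sigma Gamma) (x : sym Sigma Gamma) b : ext S (upd S x b).
Proof.
move=> s; rewrite /upd; case E: (S x) => [c|] //= hx.
case: eqP => // hs; by rewrite hs E in hx.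
Qed.

Lemma upd_at (S : Defs.pmap Sigma Gamma) (x : sym Sigma Gamma) b : S x = None -> upd S x b x = Some b.
Proof. by rewrite /upd => ->; rewrite eqxx. Qed.

Lemma ext_trans (S1 S2 S3 : Defs.pmap Sigma Gamma) : ext S1 S2 -> ext S2 S3 -> ext S1 S3.
Proof. by move=> h1 h2 s hs; rewrite h2 ?h1 //. Qed.

Lemma ext_map (S S' : Defs.pmap Sigma Gamma) (l : seq (sym Sigma Gamma)) :
  ext S S' -> (forall s, s \in l -> S s != None) -> map (val S') l = map (val S) l.
Proof.
move=> he; elim: l => //= s l IH hl; rewrite IH; last by move=> t ht; apply: hl; rewrite inE ht orbT.
by rewrite /val he // hl // inE eqxx.
Qed.

Definition Inv (q : state Sigma Gamma) : Prop :=
  let: ((i, j), M) := q in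
  [/\ forall o, M (inl o) = Some o,
      forall s, s \in take i (hat B u) -> M s != None,
      forall s, s \in take j (hat B v) -> M s != None &
      flatten (map (val M) (take i (hat B u))) = flatten (map (val M) (take j (hat B v)))].

Lemma compat_lit (S : Defs.pmap Sigma Gamma) (s : sym Sigma Gamma) (a : option Sigma) :
  (forall o, S (inl o) = Some o) -> compat S s (inl a) -> S s = None \/ S s = Some a.
Proof. rewrite /compat => ->; case: (S s) => [c ->|]; auto. Qed.

Lemma upd_val (S : Defs.pmap Sigma Gamma) (x : sym Sigma Gamma) a : S x = None \/ S x = Some a -> upd S x a x = Some a.
Proof. by case=> h; [rewrite upd_at | rewrite /upd h]. Qed.

Lemma ext_val_at (S S' : Defs.pmap Sigma Gamma) (x : sym Sigma Gamma) a : ext S S' -> S x = Some a -> S' x = Some a.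
Proof. by move=> he h; rewrite he h. Qed.

Lemma inv_step (q q' : state Sigma Gamma) : Inv q -> step B u v q q' -> Inv q'.
Proof.
move=> hI hs; case: hs hI => [i j S x y a hx hy _ cya cxa | i j S x hx cx | i j S y hy cy];
  case=> hl hu hv heq.
- set S1 := upd S x a; set S2 := upd S1 y a.
  have e1 : ext S S1 := @upd_ext _ _ _.
  have e2 : ext S1 S2 := @upd_ext _ _ _.
  have e12 := ext_trans e1 e2.
  have h1x : S1 x = Some a by apply: upd_val; apply: compat_lit.
  have h2x : S2 x = Some a by apply: ext_val_at h1x.
  have h2y : S2 y = Some a.
    apply: upd_val; case: (compat_lit hl cya) => h.
    + rewrite /S1 /upd; case E: (S x) => [c|]; first by left.
      by case: eqP => [_|_]; [right|left].
    + by right; apply: ext_val_at h.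
  split.
  + by move=> o; rewrite e12 ?hl.
  + move=> s; rewrite (onth_take hx) mem_rcons inE => /orP[/eqP->|hs]; first by rewrite h2x.
    by rewrite e12 ?hu.
  + move=> s; rewrite (onth_take hy) mem_rcons inE => /orP[/eqP->|hs]; first by rewrite h2y.
    by rewrite e12 ?hv.
  + rewrite (onth_take hx) (onth_take hy) -!cats1 !map_cat !flatten_cat /=.
    rewrite (ext_map e12 hu) (ext_map e12 hv) heq /val h2x h2y //.
- have e1 : ext S (upd S x None) := @upd_ext _ _ _.
  have h1x : upd S x None x = Some None by apply: upd_val; apply: compat_lit.
  split.
  + by move=> o; rewrite e1 ?hl.
  + move=> s; rewrite (onth_take hx) mem_rcons inE => /orP[/eqP->|hs]; first by rewrite h1x.
    by rewrite e1 ?hu.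
  + by move=> s hs; rewrite e1 ?hv.
  + rewrite (onth_take hx) -!cats1 !map_cat !flatten_cat /=.
    by rewrite (ext_map e1 hu) (ext_map e1 hv) heq /val h1x /= cats0.
- have e1 : ext S (upd S y None) := @upd_ext _ _ _.
  have h1y : upd S y None y = Some None by apply: upd_val; apply: compat_lit.
  split.
  + by move=> o; rewrite e1 ?hl.
  + by move=> s hs; rewrite e1 ?hu.
  + move=> s; rewrite (onth_take hy) mem_rcons inE => /orP[/eqP->|hs]; first by rewrite h1y.
    by rewrite e1 ?hv.
  + rewrite (onth_take hy) -!cats1 !map_cat !flatten_cat /=.
    by rewrite (ext_map e1 hu) (ext_map e1 hv) heq /val h1y /= cats0.
Qed.

Lemma inv_reach (q : state Sigma Gamma) : reach B u v q -> Inv q.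
Proof.
elim=> [|q0 q1 _ IH hs]; last exact: inv_step IH hs.
by split; rewrite /= ?take0.
Qed.

Definition Ssol (S : Defs.pmap Sigma Gamma) (X : Gamma) : seq Sigma :=
  flatten [seq val S (inr (X, k)) | k <- iota 0 (B X)].

Lemma flatten_hat (S : Defs.pmap Sigma Gamma) (w : seq (Sigma + Gamma)) :
  (forall o, S (inl o) = Some o) ->
  flatten (map (val S) (hat B w)) = subst (Ssol S) w.
Proof.
move=> hl; elim: w => //= x w IH.
rewrite /hat /= map_cat flatten_cat -/(hat B w) IH.
case: x => [a|X] /=; first by rewrite /val hl.
by rewrite /Ssol -map_comp.
Qed.

Lemma size_flat1 (f : nat -> seq Sigma) (l : seq nat) :
  (forall k, size (f k) <= 1) -> size (flatten (map f l)) <= size l.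
Proof.
move=> hf; elim: l => //= k l IH; rewrite size_cat; have := hf k; lia.
Qed.

Lemma size_Ssol (S : Defs.pmap Sigma Gamma) X : size (Ssol S X) <= B X.
Proof.
rewrite /Ssol -{2}(size_iota 0 (B X)); apply: size_flat1 => k.
by rewrite /val; case: (S _) => [[c|]|].
Qed.

Variable Sol : Gamma -> seq Sigma.

Definition fv (s : sym Sigma Gamma) : option Sigma :=
  match s with inl o => o | inr (X, k) => nth None (map Some (Sol X)) k end.

Definition good (S : Defs.pmap Sigma Gamma) := forall s, S s = None \/ S s = Some (fv s).

Lemma good_upd (S : Defs.pmap Sigma Gamma) (x : sym Sigma Gamma) : good S -> good (upd S x (fv x)).
Proof.
move=> g s; rewrite /upd; case: (S x) => [c|]; first exact: g.
by case: eqP => [->|_]; [right|exact: g].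
Qed.

Lemma good_compat (S : Defs.pmap Sigma Gamma) (x y : sym Sigma Gamma) : good S -> fv x = fv y -> compat S x y.
Proof.
move=> g e; move: (g x) (g y); rewrite /compat.
case: (S x) => [a|]; case: (S y) => [b|] // [//|[->]] [//|[->]]; by rewrite e.
Qed.

Lemma nth_tail (s : seq Sigma) m n :
  size s <= n -> map (nth None (map Some s)) (iota n m) = nseq m None.
Proof. elim: m n => //= m IH n hn; rewrite nth_default ?size_map // IH //; lia. Qed.

Lemma pmap_hat (w : seq (Sigma + Gamma)) :
  (forall X, size (Sol X) <= B X) -> pmap id (map fv (hat B w)) = subst Sol w.
Proof.
move=> hb; elim: w => //= x w IH.
rewrite /hat /= map_cat pmap_cat -/(hat B w) IH; congr (_ ++ _).
case: x => [a|X] //=.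
rewrite -map_comp /comp /=.
have -> : B X = size (Sol X) + (B X - size (Sol X)) by rewrite subnKC.
rewrite iotaD map_cat pmap_cat add0n.
have -> : [seq nth None [seq Some i | i <- Sol X] k | k <- iota 0 (size (Sol X))] = map Some (Sol X).
  by rewrite -(size_map Some (Sol X)) -/(mkseq _ _) mkseq_nth.
have -> : [seq nth None [seq Some i | i <- Sol X] k | k <- iota (size (Sol X)) (B X - size (Sol X))]
   = nseq (B X - size (Sol X)) None.
  by apply: nth_tail.
have -> : forall m, pmap id (nseq m (@None Sigma)) = [::] by elim.
rewrite cats0; elim: (Sol X) => //= c l ->; done.
Qed.

Lemma onth_nthS (T : Type) (s : seq T) i x0 : i < size s -> onth s i = Some (nth x0 s i).
Proof. by elim: s i => [|y s IH] [|i] //= h; apply: IH. Qed.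

Lemma complete_from n i j (S : Defs.pmap Sigma Gamma) :
  size (hat B u) - i + (size (hat B v) - j) <= n ->
  i <= size (hat B u) -> j <= size (hat B v) ->
  reach B u v ((i, j), S) -> good S ->
  pmap id (drop i (map fv (hat B u))) = pmap id (drop j (map fv (hat B v))) ->
  accepts B u v.
Proof.
set hu := hat B u; set hv := hat B v.
have x0 : sym Sigma Gamma := inl None.
elim: n i j S => [|n IH] i j S hn hi hj hr g hp.
  have ei : i = size hu by lia.
  have ej : j = size hv by lia.
  by exists S; rewrite -ei -ej.
case: (ltnP i (size hu)) => hi'.
  set x := nth x0 hu i.
  have ox : onth hu i = Some x := onth_nthS x0 hi'.
  have dx : drop i (map fv hu) = fv x :: drop i.+1 (map fv hu).
    by rewrite (drop_nth (fv x0)) ?size_map // (nth_map x0).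
  case E: (fv x) => [a|]; last first.
    apply: (IH i.+1 j (upd S x None)) => //; try lia.
    - apply: reach_step hr _; apply: step_left ox _; by apply: good_compat.
    - by rewrite -E; apply: good_upd.
    - by rewrite -hp dx E.
  case: (ltnP j (size hv)) => hj'.
    set y := nth x0 hv j.
    have oy : onth hv j = Some y := onth_nthS x0 hj'.
    have dy : drop j (map fv hv) = fv y :: drop j.+1 (map fv hv).
      by rewrite (drop_nth (fv x0)) ?size_map // (nth_map x0).
    case F: (fv y) => [b|]; last first.
      apply: (IH i j.+1 (upd S y None)) => //; try lia.
      - apply: reach_step hr _; apply: step_right oy _; by apply: good_compat.
      - by rewrite -F; apply: good_upd.
      - by rewrite hp dy F.
    move: hp; rewrite dx dy E F /= => -[eab hp'].
    apply: (IH i.+1 j.+1 (upd (upd S x (fv x)) y (fv x))) => //; try lia.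
    - apply: reach_step hr _; apply: step_both ox oy _ _ _; apply: good_compat => //;
        by rewrite ?E ?F ?eab.
    - have -> : fv x = fv y by rewrite E F eab.
      apply: good_upd; have <- : fv x = fv y by rewrite E F eab.
      exact: good_upd.
  by move: hp; rewrite dx E (drop_oversize (n:=j)) ?size_map.
case: (ltnP j (size hv)) => hj'.
  set y := nth x0 hv j.
  have oy : onth hv j = Some y := onth_nthS x0 hj'.
  have dy : drop j (map fv hv) = fv y :: drop j.+1 (map fv hv).
    by rewrite (drop_nth (fv x0)) ?size_map // (nth_map x0).
  case F: (fv y) => [b|]; last first.
    apply: (IH i j.+1 (upd S y None)) => //; try lia.
    - apply: reach_step hr _; apply: step_right oy _; by apply: good_compat.
    - by rewrite -F; apply: good_upd.
    - by rewrite hp dy F.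
  by move: hp; rewrite dy F (drop_oversize (n:=i)) ?size_map.
have ei : i = size hu by lia.
have ej : j = size hv by lia.
by exists S; rewrite -ei -ej.
Qed.

End Proofs.

Theorem mainTheorem1 (Sigma Gamma : finType) (u v : seq (Sigma + Gamma))
    (B : Gamma -> nat) :
  accepts B u v <->
  exists S : Gamma -> seq Sigma,
    subst S u = subst S v /\ forall X : Gamma, size (S X) <= B X.
Proof.
split.
- case=> S hr; case: (inv_reach hr) => hl _ _; rewrite !take_size => heq.
  exists (Ssol B S); split; last exact: size_Ssol.
  by rewrite -!flatten_hat.
- case=> Sol [hs hb].
  apply: (@complete_from _ _ u v B Sol (size (hat B u) + size (hat B v)) 0 0
     (fun s => match s with inl a => Some a | inr _ => None end)) => //; try lia.
  + exact: reach_init.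
  + by case=> [o|p]; [right|left].
  + by rewrite !drop0 !pmap_hat.
Qed.
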